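(* Let a target $T$ be fixed at an unknown point $(x_T,y_T)\in\mathbb{R}^2$, and consider a UAV with planar unicycle dynamics $\dot x=V\cos\psi$, $\dot y=V\sin\psi$, $\dot\psi=\omega$, where $V>0$ is a constant speed. Let $r(t)=\sqrt{(x(t)-x_T)^2+(y(t)-y_T)^2}$ be the range, and let the control input be $$\omega=\begin{cases} k\left[V\cos\!\left(\pi-\sin^{-1}\!\left(\frac{r_a}{r(t)}\right)\right)-\dot r(t)\right], & r(t)\ge r_a,\\ 0,&\text{otherwise},\end{cases}$$ where $k\neq 0$ is a constant gain and $r_a\ge 0$ is a constant parameter. If a stable circular motion exists for the closed-loop system, then its radius is $r^\star=\sqrt{r_a^2+\frac{1}{k^2}}$. Moreover, in that motion the UAV rotates clockwise if $k>0$ and counterclockwise if $k<0$.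
   Context: A stable circular motion means that the UAV moves around the target $T$ with a constant speed and at a constant distance (radius) $r$ from $T$. $\sin^{-1}$ denotes the principal branch of arcsine with values in $[-\pi/2,\pi/2]$. *)

(* Defs.v *)
From Stdlib Require Import Reals.
From Coquelicot Require Import Coquelicot.
Open Scope R_scope.

Definition range (xT yT : R) (x y : R -> R) (t : R) : R :=
  sqrt ((x t - xT) ^ 2 + (y t - yT) ^ 2).

Definition control (k V ra r rdot : R) : R :=
  if Rle_dec ra r then k * (V * cos (PI - asin (ra / r)) - rdot) else 0.

Definition closed_loop (V k ra xT yT : R) (x y psi : R -> R) : Prop :=
  forall t : R,
    is_derive x t (V * cos (psi t)) /\
    is_derive y t (V * sin (psi t)) /\
    is_derive psi t
      (control k V ra (range xT yT x y t) (Derive (range xT yT x y) t)).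

Definition circular_motion (xT yT : R) (x y : R -> R) (rc : R) : Prop :=
  forall t : R, range xT yT x y t = rc.

Definition ang_mom (V xT yT : R) (x y psi : R -> R) (t : R) : R :=
  (x t - xT) * (V * sin (psi t)) - (y t - yT) * (V * cos (psi t)).

Definition rotates_clockwise V xT yT x y psi : Prop :=
  forall t : R, ang_mom V xT yT x y psi t < 0.
Definition rotates_counterclockwise V xT yT x y psi : Prop :=
  forall t : R, ang_mom V xT yT x y psi t > 0.

(* Main.v *)
Require Import Defs.
From Stdlib Require Import Reals Lra Psatz.
From Coquelicot Require Import Coquelicot.
Open Scope R_scope.

Lemma dmul (f g : R -> R) t df dg :
  is_derive f t df -> is_derive g t dg ->
  is_derive (fun u => f u * g u) t (df * g t + f t * dg).
Proof. intros H1 H2. exact (is_derive_mult f g t df dg H1 H2 Rmult_comm). Qed.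

Lemma dplus (f g : R -> R) t df dg :
  is_derive f t df -> is_derive g t dg ->
  is_derive (fun u => f u + g u) t (df + dg).
Proof. intros H1 H2. exact (is_derive_plus f g t df dg H1 H2). Qed.

Lemma dsubc (f : R -> R) a t df :
  is_derive f t df -> is_derive (fun u => f u - a) t df.
Proof. intros H. pose proof (is_derive_minus f (fun _ => a) t df 0 H (is_derive_const a t)).
  replace df with (minus df 0). exact H0. unfold minus, plus, opp; simpl. ring. Qed.

Lemma dcos (f : R -> R) t df :
  is_derive f t df -> is_derive (fun u => cos (f u)) t (- sin (f t) * df).
Proof. intros H. pose proof (is_derive_comp cos f t _ df (is_derive_cos (f t)) H).
  replace (- sin (f t) * df) with (scal df (- sin (f t))). exact H0.
  unfold scal; simpl; unfold mult; simpl. ring. Qed.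

Lemma dsin (f : R -> R) t df :
  is_derive f t df -> is_derive (fun u => sin (f u)) t (cos (f t) * df).
Proof. intros H. pose proof (is_derive_comp sin f t _ df (is_derive_sin (f t)) H).
  replace (cos (f t) * df) with (scal df (cos (f t))). exact H0.
  unfold scal; simpl; unfold mult; simpl. ring. Qed.

Lemma dconst0 (f : R -> R) c t l : (forall u, f u = c) -> is_derive f t l -> l = 0.
Proof. intros Hc H. rewrite <- (is_derive_unique _ _ _ H).
  rewrite (Derive_ext _ (fun _ => c)) by exact Hc. apply Derive_const. Qed.

Theorem lemma1 (V k ra xT yT : R) (x y psi : R -> R) (rc : R) :
  0 < V -> k <> 0 -> 0 <= ra ->
  closed_loop V k ra xT yT x y psi ->
  circular_motion xT yT x y rc ->
  rc = sqrt (ra ^ 2 + 1 / k ^ 2) /\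
  (0 < k -> rotates_clockwise V xT yT x y psi) /\
  (k < 0 -> rotates_counterclockwise V xT yT x y psi).
Proof.
  intros HV Hk Hra HCL HC.
  assert (Hrc0 : 0 <= rc) by (rewrite <- (HC 0); apply sqrt_pos).
  assert (Hf : forall t, (x t - xT) * (x t - xT) + (y t - yT) * (y t - yT) = rc ^ 2).
  { intro t. rewrite <- (HC t). unfold range. rewrite pow2_sqrt; [ring|].
    apply Rplus_le_le_0_compat; apply pow2_ge_0. }
  assert (HD : forall t, Derive (range xT yT x y) t = 0).
  { intro t. rewrite (Derive_ext _ (fun _ => rc)) by exact HC. apply Derive_const. }
  set (om := control k V ra rc 0).
  assert (Hpsi : forall t, is_derive psi t om).
  { intro t. destruct (HCL t) as (_ & _ & H). rewrite HD, HC in H. exact H. }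
  assert (Hg : forall t, (x t - xT) * cos (psi t) + (y t - yT) * sin (psi t) = 0).
  { intro t. destruct (HCL t) as (Hx & Hy & _).
    pose proof (dplus _ _ t _ _ (dmul _ _ t _ _ (dsubc _ xT t _ Hx) (dsubc _ xT t _ Hx))
                                (dmul _ _ t _ _ (dsubc _ yT t _ Hy) (dsubc _ yT t _ Hy))) as H.
    pose proof (dconst0 _ (rc ^ 2) t _ (fun u => Hf u) H) as H'. clear H.
    apply Rmult_eq_reg_l with (2 * V); [|lra]. lra. }
  assert (HL : forall t, om * ang_mom V xT yT x y psi t = V ^ 2).
  { intro t. destruct (HCL t) as (Hx & Hy & _).
    pose proof (dplus _ _ t _ _ (dmul _ _ t _ _ (dsubc _ xT t _ Hx) (dcos _ t _ (Hpsi t)))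
                                (dmul _ _ t _ _ (dsubc _ yT t _ Hy) (dsin _ t _ (Hpsi t)))) as H.
    pose proof (dconst0 _ 0 t _ (fun u => Hg u) H) as H'. clear H.
    unfold ang_mom. pose proof (sin2_cos2 (psi t)). unfold Rsqr in H. nra. }
  assert (HL2 : forall t, (ang_mom V xT yT x y psi t) ^ 2 = V ^ 2 * rc ^ 2).
  { intro t. rewrite <- (Hf t). pose proof (Hg t). pose proof (sin2_cos2 (psi t)). unfold Rsqr in H0.
    unfold ang_mom.
    replace (((x t - xT) * (V * sin (psi t)) - (y t - yT) * (V * cos (psi t))) ^ 2)
      with (((x t - xT) * (V * sin (psi t)) - (y t - yT) * (V * cos (psi t))) ^ 2
            + V^2 * ((x t - xT) * cos (psi t) + (y t - yT) * sin (psi t))^2) by (rewrite H; ring).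
    replace (V ^ 2 * ((x t - xT) * (x t - xT) + (y t - yT) * (y t - yT))) with
      (V ^ 2 * ((x t - xT) * (x t - xT) + (y t - yT) * (y t - yT)) * (sin (psi t) * sin (psi t) + cos (psi t) * cos (psi t))) by (rewrite H0; ring).
    ring. }
  pose proof (HL 0) as L0. pose proof (HL2 0) as L02.
  set (L := ang_mom V xT yT x y psi 0) in *.
  assert (Hom : om <> 0) by (intro E; rewrite E in L0; nra).
  assert (HrcL : ra <= rc).
  { destruct (Rle_dec ra rc) as [h|h]; [exact h|].
    exfalso. apply Hom. unfold om, control. destruct (Rle_dec ra rc); [contradiction|reflexivity]. }
  assert (Hrcp : 0 < rc).
  { destruct (Req_dec rc 0) as [E|E]; [|lra]. rewrite E in L02.
    assert (L * L = 0) as HL1 by (simpl in L02; lra).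
    assert (L = 0) as HL0 by (apply Rsqr_0_uniq; exact HL1).
    rewrite HL0 in L0. nra. }
  set (s := sqrt (1 - (ra / rc)²)).
  assert (Hs0 : 0 <= s) by apply sqrt_pos.
  assert (Hq : 0 <= ra / rc <= 1).
  { split. apply Rdiv_le_0_compat; lra.
    apply Rmult_le_reg_r with rc; [lra|]. unfold Rdiv. rewrite Rmult_assoc, Rinv_l; lra. }
  assert (Hs2 : s * s = 1 - ra ^ 2 / rc ^ 2).
  { unfold s. rewrite sqrt_sqrt.
    - unfold Rsqr. field. lra.
    - unfold Rsqr. destruct Hq as [q1 q2]. assert (ra / rc * (ra / rc) <= 1 * 1) by (apply Rmult_le_compat; lra). lra. }
  assert (Homv : om = - k * V * s).
  { unfold om, control. destruct (Rle_dec ra rc) as [_|h]; [|lra].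
    rewrite Rtrigo_facts.cos_pi_minus, cos_asin by lra. fold s. ring. }
  assert (Hkey : om ^ 2 * rc ^ 2 = V ^ 2).
  { apply Rmult_eq_reg_l with (V ^ 2); [|nra].
    replace (V ^ 2 * (om ^ 2 * rc ^ 2)) with (om ^ 2 * (V ^ 2 * rc ^ 2)) by ring.
    rewrite <- L02. replace (om ^ 2 * L ^ 2) with ((om * L) ^ 2) by ring. rewrite L0. ring. }
  assert (Hk2 : k ^ 2 * (rc ^ 2 - ra ^ 2) = 1).
  { rewrite Homv in Hkey.
    replace ((- k * V * s) ^ 2 * rc ^ 2) with (V ^ 2 * (k ^ 2 * (s * s) * rc ^ 2)) in Hkey by ring.
    rewrite Hs2 in Hkey.
    replace (k ^ 2 * (1 - ra ^ 2 / rc ^ 2) * rc ^ 2) with (k ^ 2 * (rc ^ 2 - ra ^ 2)) in Hkey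
      by (field; lra).
    apply Rmult_eq_reg_l with (V ^ 2); [|nra]. lra. }
  split; [|split].
  - assert (E : ra ^ 2 + 1 / k ^ 2 = rc ^ 2).
    { rewrite <- Hk2. field. auto. }
    rewrite E. rewrite sqrt_pow2; lra.
  - intros kp t. pose proof (HL t) as Ht. rewrite Homv in Ht.
    assert (0 < s) by (destruct (Req_dec s 0) as [E|E]; [rewrite E in Ht; nra | lra]).
    assert (0 < k * V * s) by (apply Rmult_lt_0_compat; [apply Rmult_lt_0_compat|]; lra).
    destruct (Rlt_dec (ang_mom V xT yT x y psi t) 0) as [h|h]; [exact h|].
    exfalso. assert (0 <= k * V * s * ang_mom V xT yT x y psi t) by (apply Rmult_le_pos; lra).
    assert (0 < V ^ 2) by (apply pow_lt; lra). lra.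
  - intros kn t. pose proof (HL t) as Ht. rewrite Homv in Ht.
    assert (0 < s) by (destruct (Req_dec s 0) as [E|E]; [rewrite E in Ht; nra | lra]).
    assert (0 < - k * V * s) by (apply Rmult_lt_0_compat; [apply Rmult_lt_0_compat|]; lra).
    destruct (Rlt_dec 0 (ang_mom V xT yT x y psi t)) as [h|h]; [exact h|].
    exfalso. assert (0 <= - k * V * s * - ang_mom V xT yT x y psi t) by (apply Rmult_le_pos; lra).
    assert (0 < V ^ 2) by (apply pow_lt; lra). lra.
Qed.
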